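(* Let $v_1,\dots,v_n\in\mathbb{R}^d$, $x\in[0,1]^n$ with $\sum_i x(i)=q$, and $X=\sum_i x(i)v_iv_i^\top$ with $\lambda_{\min}(X)>0$; let $\lambda_{\mathrm{avg}}(X)=\operatorname{tr}(X)/d$. Let $S\subseteq[n]$ with $|S|=b$, $Z=\sum_{i\in S}v_iv_i^\top$, and $0<\varepsilon<\frac12$. Set $\alpha=\frac{\sqrt d}{\varepsilon\lambda_{\min}(X)}$, let $A=(\alpha Z-\ell I)^{-2}$ where $\ell\in\mathbb{R}$ is the unique scalar with $\alpha Z-\ell I\succ0$ and $\operatorname{tr}(A)=1$, let $S'=\{i\in S:2\alpha\langle v_iv_i^\top,A^{1/2}\rangle<1\}$ and \[ \Phi(i,j)=\frac{\langle v_jv_j^\top,A\rangle}{1+2\alpha\langle v_jv_j^\top,A^{1/2}\rangle}-\frac{\langle v_iv_i^\top,A\rangle}{1-2\alpha\langle v_iv_i^\top,A^{1/2}\rangle}. \] If $\lambda_{\min}(Z)\le(1-2\varepsilon)\lambda_{\min}(X)$ and $b\ge q+2\big(d+\frac d\varepsilon\big)+\frac{2d}{\varepsilon}\sqrt{\frac{\lambda_{\mathrm{avg}}(X)}{\lambda_{\min}(X)}}$, then there exist $i\in S'$ and $j\in[n]\setminus S$ with $\Phi(i,j)\ge\frac{\varepsilon}{b}\lambda_{\min}(X)$ (equivalently, $\max_{i\in S',\,j\in[n]\setminus S}\Phi(i,j)\ge\frac\varepsilon b\lambda_{\min}(X)$).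
   Context: For symmetric matrices $\langle A,B\rangle=\operatorname{tr}(AB)$. *)

(* Defs.v *)
From HB Require Import structures.
From mathcomp Require Import all_boot all_order all_algebra.
From mathcomp Require Import reals.
Set Implicit Arguments. Unset Strict Implicit. Unset Printing Implicit Defensive.
Import Order.TTheory GRing.Theory Num.Theory.
Local Open Scope ring_scope.

Definition mxinner (R : realType) (d : nat) (A B : 'M[R]_d) : R := \tr (A *m B).

Definition outer (R : realType) (d : nat) (v : 'cV[R]_d) : 'M[R]_d := v *m v^T.

Definition is_lambda_min (R : realType) (d : nat) (M : 'M[R]_d) (lam : R) : Prop :=
  eigenvalue M lam /\ (forall mu : R, eigenvalue M mu -> lam <= mu).

Definition posdef (R : realType) (d : nat) (M : 'M[R]_d) : Prop :=
  M^T = M /\ forall u : 'cV[R]_d, u != 0 -> 0 < (u^T *m M *m u) 0 0.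
Definition psd (R : realType) (d : nat) (M : 'M[R]_d) : Prop :=
  M^T = M /\ forall u : 'cV[R]_d, 0 <= (u^T *m M *m u) 0 0.

(* Main.v *)
Require Import Defs.
From HB Require Import structures.
From mathcomp Require Import all_boot all_order all_algebra.
From mathcomp Require Import reals.
From mathcomp Require Import ring lra.
From mathcomp Require classical_sets.
Set Implicit Arguments. Unset Strict Implicit. Unset Printing Implicit Defensive.
Import Order.TTheory GRing.Theory Num.Theory.
Local Open Scope ring_scope.


Section H.
Variable R : realType.

Lemma disc (a b c : R) : 0 <= a ->
  (forall t, 0 <= a * t ^+ 2 + 2 * b * t + c) -> b ^+ 2 <= a * c.
Proof.
move=> a0 H; have [az|ap] := eqVneq a 0.
  have [b0|bn0] := eqVneq b 0; first by rewrite b0 az; nra.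
  have h := H (- (c + 1) / (2 * b)).
  have e : 2 * b * (- (c + 1) / (2 * b)) = - (c + 1).
    by field.
  move: h; rewrite e az => h; exfalso; nra.
have apos : 0 < a by rewrite lt_def ap a0.
have h := H (- b / a).
have e : a * (- b / a) ^+ 2 + 2 * b * (- b / a) + c = (a * c - b ^+ 2) / a by field.
by move: h; rewrite e pmulr_lge0 ?invr_gt0 // subr_ge0.
Qed.

Lemma quad_nonneg (p r c t : R) : 0 <= p -> 0 <= r -> c ^+ 2 <= p * r ->
  0 <= p * t ^+ 2 - 2 * c * t + r.
Proof.
move=> p0 r0 h; have [pz|pn] := eqVneq p 0.
  move: h; rewrite pz mul0r => h.
  have c0 : c = 0 by apply/eqP; rewrite -sqrf_eq0 eq_le h sqr_ge0.
  by rewrite c0 mul0r !mulr0 mul0r subr0 add0r.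
have pp : 0 < p by rewrite lt_def pn p0.
rewrite -(pmulr_rge0 _ pp).
have -> : p * (p * t ^+ 2 - 2 * c * t + r) = (p * t - c) ^+ 2 + (p * r - c ^+ 2) by ring.
by rewrite addr_ge0 ?sqr_ge0 ?subr_ge0.
Qed.

Lemma wCS (I : finType) (w p r c : I -> R) :
  (forall k, 0 <= w k) -> (forall k, 0 <= p k) -> (forall k, 0 <= r k) ->
  (forall k, c k ^+ 2 <= p k * r k) ->
  (\sum_k w k * c k) ^+ 2 <= (\sum_k w k * p k) * (\sum_k w k * r k).
Proof.
move=> w0 p0 r0 h.
have -> : (\sum_k w k * c k) ^+ 2 = (- \sum_k w k * c k) ^+ 2 by rewrite sqrrN.
apply: disc; first by apply: sumr_ge0 => k _; rewrite mulr_ge0.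
move=> t.
have -> : (\sum_k w k * p k) * t ^+ 2 + 2 * - (\sum_k w k * c k) * t + \sum_k w k * r k
   = \sum_k w k * (p k * t ^+ 2 - 2 * c k * t + r k).
  rewrite mulr_suml mulrN mulNr mulr_sumr mulr_suml -sumrN -!big_split /=.
  by apply: eq_bigr => k _; ring.
by apply: sumr_ge0 => k _; rewrite mulr_ge0 ?quad_nonneg.
Qed.

Lemma CS (I : finType) (a b : I -> R) :
  (\sum_k a k * b k) ^+ 2 <= (\sum_k a k ^+ 2) * (\sum_k b k ^+ 2).
Proof.
have := @wCS I (fun=> 1) (fun k => a k ^+ 2) (fun k => b k ^+ 2) (fun k => a k * b k).
rewrite !(eq_bigr _ (fun k _ => mul1r _)); apply => // k; rewrite ?sqr_ge0 //.
by rewrite exprMn.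
Qed.

End H.


Section H2.
Variable R : realType.
Variable d : nat.
Implicit Types (M N : 'M[R]_d) (u w : 'cV[R]_d).

Definition n2 u := \sum_i u i 0 ^+ 2.
Definition Fro M := \sum_i \sum_j M i j ^+ 2.

Lemma n2_ge0 u : 0 <= n2 u.
Proof. by apply: sumr_ge0 => i _; rewrite sqr_ge0. Qed.

Lemma Fro_ge0 M : 0 <= Fro M.
Proof. by apply: sumr_ge0 => i _; apply: sumr_ge0 => j _; rewrite sqr_ge0. Qed.

Lemma mulvE M u i : (M *m u) i 0 = \sum_j M i j * u j 0.
Proof. by rewrite mxE. Qed.

Lemma innerE u w : (u^T *m w) 0 0 = \sum_i u i 0 * w i 0.
Proof. by rewrite mxE; apply: eq_bigr => i _; rewrite mxE. Qed.

Lemma n2E u : n2 u = (u^T *m u) 0 0.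
Proof. by rewrite innerE; apply: eq_bigr => i _; rewrite expr2. Qed.

Lemma n2_mul M u : n2 (M *m u) <= Fro M * n2 u.
Proof.
rewrite /n2 /Fro mulr_suml; apply: ler_sum => i _.
by rewrite mulvE; apply: CS.
Qed.

Lemma quad_sq M u : ((u^T *m M *m u) 0 0) ^+ 2 <= Fro M * n2 u ^+ 2.
Proof.
rewrite -mulmxA innerE.
apply: le_trans (CS _ _) _.
rewrite -/(n2 u) -/(n2 (M *m u)) [Fro M * _]mulrC expr2 -mulrA.
by rewrite ler_wpM2l ?n2_ge0 // mulrC n2_mul.
Qed.

Lemma tr_sq M : (\tr M) ^+ 2 <= d%:R * Fro M.
Proof.
have -> : \tr M = \sum_i 1 * M i i by apply: eq_bigr => i _; rewrite mul1r.
apply: le_trans (CS _ _) _.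
rewrite (eq_bigr (fun=> 1)) ?expr1n // sumr_const card_ord.
rewrite ler_wpM2l ?ler0n //; apply: ler_sum => i _.
rewrite (bigD1 i) //= lerDl; apply: sumr_ge0 => j _; exact: sqr_ge0.
Qed.

Lemma FroE M : Fro M = \tr (M^T *m M).
Proof.
rewrite /Fro /mxtrace (exchange_big).
apply: eq_bigr => j _; rewrite mxE; apply: eq_bigr => i _; by rewrite mxE expr2.
Qed.

Lemma quadTT M u : (u^T *m (M^T *m M) *m u) 0 0 = n2 (M *m u).
Proof. by rewrite n2E trmx_mul !mulmxA. Qed.

Lemma tr_quad_col M N : \tr (N^T *m M *m N) = \sum_e ((col e N)^T *m M *m col e N) 0 0.
Proof.
apply: eq_bigr => e _.
have -> : (col e N)^T *m M *m col e N = row e (N^T *m M *m N) *m delta_mx e 0.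
  by rewrite colE trmx_mul trmx_delta rowE !mulmxA.
by rewrite -colE !mxE.
Qed.

End H2.

Module RayleighMod.
Import classical_sets.


Section H3.
Variable R : realType.
Variable d : nat.
Implicit Types (M N : 'M[R]_d) (u w : 'cV[R]_d).

Definition qf M u := (u^T *m M *m u) 0 0.
Definition bf M w u := (w^T *m M *m u) 0 0.

Lemma bfC M w u : M^T = M -> bf M u w = bf M w u.
Proof.
move=> sM; rewrite /bf; transitivity ((u^T *m M *m w)^T 0 0); first by rewrite [RHS]mxE.
by rewrite !trmx_mul trmxK sM mulmxA.
Qed.

Lemma qf_add M w u t : M^T = M ->
  qf M (w + t *: u) = qf M w + 2 * bf M w u * t + qf M u * t ^+ 2.
Proof.
move=> sM; have e : (w + t *: u)^T = w^T + t *: u^T by rewrite linearD linearZ.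
rewrite /qf /bf e !mulmxDl !mulmxDr -!scalemxAl -!scalemxAr.
set a := w^T *m M *m w; set b1 := w^T *m M *m u; set b2 := u^T *m M *m w.
set c := u^T *m M *m u.
have hb : b2 0 0 = b1 0 0 by exact: bfC.
clearbody a b1 b2 c; rewrite !mxE hb; ring.
Qed.

Lemma n2_gt0 u : u != 0 -> 0 < n2 u.
Proof.
move=> un0; rewrite lt_def n2_ge0 andbT; apply: contra un0 => /eqP h.
apply/eqP/matrixP => i j; rewrite (ord1 j) mxE.
have := h; rewrite /n2 => /eqP; rewrite psumr_eq0; last by move=> k _; rewrite sqr_ge0.
by move=> /allP /(_ i) /=; rewrite mem_index_enum sqrf_eq0 => /(_ isT) /eqP.
Qed.

Lemma n2_eq0 u : n2 u = 0 -> u = 0.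
Proof. by move=> h; apply/eqP; apply/negPn/negP => /n2_gt0; rewrite h ltxx. Qed.

Lemma qf_bound M u : - ((Fro M + 1) * n2 u) <= qf M u <= (Fro M + 1) * n2 u.
Proof.
have h := quad_sq M u; have hF := Fro_ge0 M; have hn := n2_ge0 u.
rewrite -/(qf M u) in h.
have h2 : qf M u ^+ 2 <= ((Fro M + 1) * n2 u) ^+ 2.
  apply: le_trans h _; rewrite exprMn ler_wpM2r ?sqr_ge0 //; nra.
have hK : 0 <= (Fro M + 1) * n2 u by rewrite mulr_ge0 // addr_ge0.
move: h2 hK; set a := qf M u; set b := (Fro M + 1) * n2 u => h2 hK.
apply/andP; split; nra.
Qed.

Lemma semiCS M w u : M^T = M -> (forall z, 0 <= qf M z) ->
  bf M w u ^+ 2 <= qf M u * qf M w.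
Proof.
move=> sM psd; apply: disc => // t.
have := psd (w + t *: u); rewrite qf_add //; lra.
Qed.

Lemma coercive M : M^T = M -> (forall z, 0 <= qf M z) -> M \in unitmx ->
  exists2 c, 0 < c & forall u, c * n2 u <= qf M u.
Proof.
move=> sM psd uM.
set K := Fro M + 1; set G := Fro (invmx M) * K.
have K0 : 0 <= K by rewrite addr_ge0 ?Fro_ge0.
have G0 : 0 <= G by rewrite mulr_ge0 ?Fro_ge0.
exists (G + 1)^-1; first by rewrite invr_gt0 ltr_wpDl.
move=> u.
have h1 : n2 (M *m u) <= K * qf M u.
  have hs := semiCS (M *m u) u sM psd.
  have e : bf M (M *m u) u = n2 (M *m u).
    by rewrite /bf n2E trmx_mul sM !mulmxA.
  rewrite e in hs.
  have hq : qf M (M *m u) <= K * n2 (M *m u).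
    by case/andP: (qf_bound M (M *m u)).
  have hq0 := psd u; have hn := n2_ge0 (M *m u); have hqq := psd (M *m u).
  move: hs hq hq0 hn hqq; set n := n2 (M *m u); set a := qf M u; set b := qf M (M *m u).
  move=> hs hq hq0 hn hqq.
  have [n0|np] := eqVneq n 0; first by rewrite n0 mulr_ge0.
  have npos : 0 < n by rewrite lt_def np hn.
  have : n * n <= n * (K * a).
    rewrite -expr2; apply: le_trans hs _.
    nra.
  by rewrite ler_pM2l.
have h2 : n2 u <= Fro (invmx M) * n2 (M *m u).
  by have := n2_mul (invmx M) (M *m u); rewrite mulKmx.
have h3 : n2 u <= G * qf M u.
  apply: le_trans h2 _; rewrite /G -mulrA ler_wpM2l ?Fro_ge0 //.
rewrite mulrC -ler_pdivlMr ?invr_gt0 ?ltr_wpDl // invrK.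
have := psd u; nra.
Qed.

Lemma qf0 M : qf M 0 = 0.
Proof. by rewrite /qf trmx0 !mul0mx mxE. Qed.

Lemma n20 : n2 (0 : 'cV[R]_d) = 0.
Proof. by rewrite /n2 big1 // => i _; rewrite mxE expr0n. Qed.

Lemma rayleigh M lam : M^T = M -> (forall mu, eigenvalue M mu -> lam <= mu) ->
  forall u, lam * n2 u <= qf M u.
Proof.
move=> sM hmin u0; rewrite leNgt; apply/negP => hlt.
have u0n : u0 != 0.
  by apply: contraTneq hlt => ->; rewrite qf0 n20 mulr0 ltxx.
pose E : set R := fun r => exists2 w : 'cV[R]_d, w != 0 & r = qf M w / n2 w.
have Elb : lbound E (- (Fro M + 1)).
  move=> r [w wn ->]; rewrite ler_pdivlMr ?n2_gt0 //.
  by case/andP: (qf_bound M w); rewrite mulNr.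
have Ene : exists r, E r by exists (qf M u0 / n2 u0); exists u0.
have Ehl : has_lbound E by exists (- (Fro M + 1)).
set mu := inf E.
have mu_lb := ge_inf Ehl.
have hmu : mu < lam.
  apply: le_lt_trans (mu_lb _ _) _; first by exists u0.
  by rewrite ltr_pdivrMr ?n2_gt0.
have psdX : forall w, mu * n2 w <= qf M w.
  move=> w; have [->|wn] := eqVneq w 0.
    by rewrite qf0 n20 mulr0.
  by rewrite -ler_pdivlMr ?n2_gt0 //; apply: mu_lb; exists w.
set Mm := M - mu%:M.
have qMm : forall w, qf Mm w = qf M w - mu * n2 w.
  move=> w; rewrite /qf /Mm.
  have -> : w^T *m (M - mu%:M) *m w = w^T *m M *m w - mu *: (w^T *m w).
    by rewrite mulmxBr mulmxBl mul_mx_scalar scalemxAl.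
  by rewrite n2E !mxE.
have sMm : Mm^T = Mm by rewrite /Mm linearB /= sM tr_scalar_mx.
have psdMm : forall w, 0 <= qf Mm w by move=> w; rewrite qMm subr_ge0.
have : ~~ (Mm \in unitmx).
  apply/negP => uMm; have [c c0 hc] := coercive sMm psdMm uMm.
  have : mu + c <= mu.
    apply: lb_le_inf Ene _ => r [w wn ->].
    rewrite ler_pdivlMr ?n2_gt0 //; have := hc w; rewrite qMm; lra.
  lra.
rewrite -row_free_unit -kermx_eq0 => hk.
have := hmin mu hk; lra.
Qed.

End H3.

End RayleighMod.
Import RayleighMod.


Section H4.
Variable R : realType.

Lemma sumS (I : finType) (S : {set I}) (f : I -> R) :
  \sum_(k in S) f k = \sum_k (k \in S)%:R * f k.
Proof.
rewrite big_mkcond /=; apply: eq_bigr => k _.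
by case: (k \in S); rewrite ?mul1r ?mul0r.
Qed.

Lemma final_arith (Y W T E b q p G m del lam eps : R) :
  0 < lam -> 0 < eps -> 0 <= m -> 0 <= del -> 0 < q -> 0 <= p -> 0 <= G ->
  T = q + p -> q + G <= E -> E <= b -> 0 < b -> del = eps / b * lam ->
  p ^+ 2 * lam <= G ^+ 2 * Y ->
  W + eps * lam < lam -> lam <= Y ->
  Y - W <= (m + del) * T - m * E -> m * E <= W -> False.
Proof.
move=> l0 e0 m0 d0 q0 p0 G0 hT hE hEb b0 hd hP hW hY h1 h2.
have E0 : 0 < E by lra.
have hdE : del * E <= eps * lam.
  have h : E / b <= 1 by rewrite ler_pdivrMr // mul1r.
  have -> : del * E = eps * lam * (E / b) by rewrite hd; field; rewrite gt_eqF.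
  have el : 0 <= eps * lam by rewrite mulr_ge0 ?ltW.
  by rewrite -[X in _ <= X]mulr1 ler_wpM2l.
have [TE|ET] := leP T E.
  have : del * T <= del * E by rewrite ler_wpM2l.
  nra.
have hm : m * (T - E) * E <= W * (T - E) by nra.
have h3 : (Y - W) * E <= (m * (T - E) + del * T) * E.
  have e : m * (T - E) + del * T = (m + del) * T - m * E by ring.
  by apply: (ler_wpM2r (ltW E0)); rewrite e.
have h4 : Y * E < lam * T.
  have : del * T * E <= eps * lam * T by nra.
  nra.
have h5 : Y * G < lam * p.
  have : lam * q <= Y * q by rewrite (ler_wpM2r (ltW q0)).
  nra.
have YG0 : 0 <= Y * G by rewrite mulr_ge0 //; lra.
have h6 : (Y * G) ^+ 2 < (lam * p) ^+ 2.
  nra.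
have : (lam * p) ^+ 2 <= lam * (G ^+ 2 * Y).
  have h := ler_wpM2l (ltW l0) hP.
  have e : (lam * p) ^+ 2 = lam * (p ^+ 2 * lam) by ring.
  by rewrite e.
nra.
Qed.

End H4.


Section H5.
Variable R : realType.

Lemma swap_exists (I : finType) (S : {set I}) (x a c : I -> R) (al lam eps G : R) :
  (forall k, 0 <= x k <= 1) -> (forall k, 0 <= a k) -> (forall k, 0 <= c k) ->
  0 <= al -> 0 < lam -> 0 < eps -> 0 <= G ->
  lam <= \sum_k x k * a k ->
  \sum_(k in S) a k + eps * lam < lam ->
  \sum_k x k + G <= #|S|%:R - 2 * al * \sum_(k in S) c k ->
  (2 * al * \sum_k x k * c k) ^+ 2 * lam <= G ^+ 2 * \sum_k x k * a k ->
  exists i j, i \in [set i in S | 2 * al * c i < 1] /\ j \notin S /\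
     eps / #|S|%:R * lam <= a j / (1 + 2 * al * c j) - a i / (1 - 2 * al * c i).
Proof.
move=> hx ha hc al0 l0 e0 G0.
set S' := [set i in S | 2 * al * c i < 1].
set b := #|S|%:R.
set Y := \sum_k x k * a k; set W := \sum_(k in S) a k; set q := \sum_k x k.
set P := \sum_k x k * c k; set C := \sum_(k in S) c k.
move=> hY hW hE hP.
have x0 : forall k, 0 <= x k by move=> k; case/andP: (hx k).
have x1 : forall k, x k <= 1 by move=> k; case/andP: (hx k).
have C0 : 0 <= C by apply: sumr_ge0.
have P0 : 0 <= P by apply: sumr_ge0 => k _; rewrite mulr_ge0.
have q0 : 0 < q.
  rewrite lt_def sumr_ge0 ?andbT //; apply/negP => /eqP.
  move/eqP; rewrite psumr_eq0 // => /allP hall.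
  have : Y = 0.
    rewrite /Y big1 // => k _.
    by have /eqP -> := hall k (mem_index_enum k); rewrite mul0r.
  lra.
have bE : b = \sum_(k in S) 1 by rewrite sumr_const.
have alC : 0 <= 2 * al * C by rewrite !mulr_ge0.
have b0 : 0 < b by lra.
have [i0 Hi0] : exists i0, i0 \in S'.
  case: (pickP (mem S')) => [i0 Hi0|none]; first by exists i0.
  exfalso.
  have : b <= 2 * al * C.
    rewrite bE /C mulr_sumr; apply: ler_sum => k kS.
    have := none k; rewrite /= /S' inE kS /= => /negbT.
    by rewrite -leNgt.
  lra.
set del := eps / b * lam.
case: (boolP [exists i, exists j, [&& i \in S', j \notin S &
    del <= a j / (1 + 2 * al * c j) - a i / (1 - 2 * al * c i)]]).
  move=> /existsP [i /existsP [j /and3P [Hi Hj Hp]]].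
  by exists i, j.
move=> /existsPn Hno; exfalso.
pose g k := a k / (1 - 2 * al * c k).
case: (arg_minP g Hi0) => i1 Hi1 hmin.
have Hi1' : i1 \in S' := Hi1.
have [i1S i1c] : i1 \in S /\ 2 * al * c i1 < 1 by move: Hi1'; rewrite /S' inE => /andP.
set m := g i1.
have m0 : 0 <= m by rewrite /m /g divr_ge0 // subr_ge0 ltW.
have A1 : forall k, k \in S -> m * (1 - 2 * al * c k) <= a k.
  move=> k kS; case: (ltP (2 * al * c k) 1) => hk.
    have kS' : k \in S' by rewrite /S' inE kS hk.
    have := hmin k kS'; rewrite /g -/m => h.
    by rewrite -ler_pdivlMr ?subr_gt0.
  apply: le_trans (ha k); rewrite mulr_ge0_le0 // subr_le0 //.
have A2 : forall k, k \notin S -> a k <= (m + del) * (1 + 2 * al * c k).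
  move=> k kS; have := Hno i1; move=> /existsPn /(_ k).
  rewrite Hi1' kS /= -ltNge -/(g i1) -/m => h.
  have pos : 0 < 1 + 2 * al * c k by rewrite ltr_pwDl // !mulr_ge0.
  rewrite -ler_pdivrMr //; lra.
have F : forall k, x k * a k - (k \in S)%:R * a k
     - (m + del) * (x k + 2 * al * (x k * c k))
     + m * ((k \in S)%:R - 2 * al * ((k \in S)%:R * c k)) <= 0.
  move=> k; have := x0 k; have := x1 k; have := hc k; have := ha k.
  have d0 : 0 <= del by rewrite /del !mulr_ge0 // ?invr_ge0 ltW.
  case kS: (k \in S) => /=.
    have := A1 k kS.
    move: (x k) (a k) (c k) => xk ak ck h1 h2 h3 h4 h5.
    rewrite !mul1r.
    have h6 : (1 - xk) * (m * (1 - 2 * al * ck)) <= (1 - xk) * ak.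
      by rewrite ler_wpM2l // subr_ge0.
    have h7 : 0 <= m * xk * (al * ck) by apply/mulr_ge0; apply/mulr_ge0.
    have h8 : 0 <= del * (xk + 2 * al * (xk * ck)).
      by apply: mulr_ge0 => //; apply: addr_ge0 => //; apply/mulr_ge0; apply/mulr_ge0.
    nra.
  have := A2 k (negbT kS).
  move: (x k) (a k) (c k) => xk ak ck h1 h2 h3 h4 h5.
  rewrite !mul0r.
  have h6 : xk * ak <= xk * ((m + del) * (1 + 2 * al * ck)) by rewrite ler_wpM2l.
  nra.
have eW : W = \sum_k (k \in S)%:R * a k by rewrite /W sumS.
have eC : C = \sum_k (k \in S)%:R * c k by rewrite /C sumS.
have eb : b = \sum_k (k \in S)%:R.
  by rewrite bE sumS; apply: eq_bigr => k _; rewrite mulr1.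
have HS : \sum_k (x k * a k - (k \in S)%:R * a k
     - (m + del) * (x k + 2 * al * (x k * c k))
     + m * ((k \in S)%:R - 2 * al * ((k \in S)%:R * c k)))
   = Y - W - (m + del) * (q + 2 * al * P) + m * (b - 2 * al * C).
  rewrite eW eb eC /Y /q /P.
  rewrite !big_split /= !sumrN -!mulr_sumr !big_split /= !sumrN -!mulr_sumr.
  by [].
have h1 : Y - W <= (m + del) * (q + 2 * al * P) - m * (b - 2 * al * C).
  have : \sum_k (x k * a k - (k \in S)%:R * a k
     - (m + del) * (x k + 2 * al * (x k * c k))
     + m * ((k \in S)%:R - 2 * al * ((k \in S)%:R * c k))) <= 0.
    by rewrite -oppr_ge0 -sumrN; apply: sumr_ge0 => k _; rewrite oppr_ge0; exact: F.
  rewrite HS; lra.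
have h2 : m * (b - 2 * al * C) <= W.
  have -> : m * (b - 2 * al * C) = \sum_(k in S) m * (1 - 2 * al * c k).
    by rewrite -mulr_sumr sumrB -mulr_sumr bE.
  by apply: ler_sum => k kS; exact: A1.
have d0 : 0 <= del by rewrite /del !mulr_ge0 // ?invr_ge0 ltW.
apply: (final_arith (T := q + 2 * al * P) (p := 2 * al * P) l0 e0 m0 d0 q0 _ G0
   erefl hE _ b0 erefl hP hW hY h1 h2).
- by rewrite mulr_ge0 // mulr_ge0.
- lra.
Qed.
End H5.


Section M1.
Variable R : realType.
Variable d : nat.
Implicit Types (M N : 'M[R]_d) (u w : 'cV[R]_d).

Lemma mxinner_outerE u M : mxinner (outer u) M = qf M u.
Proof. by rewrite /mxinner /outer -mulmxA mxtrace_mulC trace_mx11. Qed.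

Lemma tr_outer u : \tr (outer u) = n2 u.
Proof. by rewrite /outer mxtrace_mulC trace_mx11 n2E. Qed.

Lemma outerT u : (outer u)^T = outer u.
Proof. by rewrite /outer trmx_mul trmxK. Qed.

Lemma tr_sum_mul (I : finType) (P : pred I) (F : I -> 'M[R]_d) M :
  \tr ((\sum_(k | P k) F k) *m M) = \sum_(k | P k) \tr (F k *m M).
Proof. by rewrite mulmx_suml raddf_sum. Qed.

Lemma sum_symT (I : finType) (P : pred I) (F : I -> 'M[R]_d) :
  (forall k, (F k)^T = F k) -> (\sum_(k | P k) F k)^T = \sum_(k | P k) F k.
Proof. by move=> h; rewrite raddf_sum; apply: eq_bigr => k _; exact: h. Qed.

Lemma sqr_le_le (x s : R) : 0 <= s -> x ^+ 2 <= s ^+ 2 -> x <= s.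
Proof. move=> s0 h; nra. Qed.

Lemma tr_ge0_psd N : (forall u, 0 <= qf N u) -> 0 <= \tr N.
Proof.
move=> h; have := tr_quad_col N 1%:M; rewrite trmx1 mul1mx mulmx1 => ->.
by apply: sumr_ge0 => e _; apply: h.
Qed.

Lemma sum_n2_col N : \sum_e n2 (col e N) = Fro N.
Proof.
rewrite /Fro /n2 exchange_big; apply: eq_bigr => i _; apply: eq_bigr => j _.
by rewrite mxE.
Qed.

End M1.


Theorem proposition3p12 (R : realType) (n d : nat) (v : 'I_n -> 'cV[R]_d)
  (x : 'I_n -> R) (S : {set 'I_n}) (eps lamX lamZ ell : R)
  (Asqrt : 'M[R]_d) :
  (forall i, 0 <= x i <= 1) ->
  let q := \sum_(i < n) x i in
  let X := \sum_(i < n) x i *: outer (v i) in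
  is_lambda_min X lamX -> 0 < lamX ->
  let lamavg := \tr X / d%:R in
  let b := #|S| in
  let Z := \sum_(i in S) outer (v i) in
  0 < eps < 1 / 2 ->
  let alpha := Num.sqrt d%:R / (eps * lamX) in
  let A := invmx ((alpha *: Z - ell%:M) ^+ 2) in
  posdef (alpha *: Z - ell%:M) -> \tr A = 1 ->
  psd Asqrt -> Asqrt *m Asqrt = A ->
  let S' := [set i in S | 2 * alpha * mxinner (outer (v i)) Asqrt < 1] in
  let Phi := fun i j =>
    mxinner (outer (v j)) A / (1 + 2 * alpha * mxinner (outer (v j)) Asqrt)
    - mxinner (outer (v i)) A / (1 - 2 * alpha * mxinner (outer (v i)) Asqrt) in
  is_lambda_min Z lamZ ->
  lamZ <= (1 - 2 * eps) * lamX ->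
  b%:R >= q + 2 * (d%:R + d%:R / eps)
          + 2 * d%:R / eps * Num.sqrt (lamavg / lamX) ->
  exists i, exists j, i \in S' /\ j \notin S /\ Phi i j >= eps / b%:R * lamX.
Proof.
move=> hx q X [eigX minX] l0 lamavg b Z /andP[e0 eh] alpha A [BT Bpd] trA
  [NT Npsd] NN S' Phi [eigZ minZ] hZ hb.
pose N := Asqrt; rewrite -/N in NT Npsd NN.
pose B := alpha *: Z - ell%:M; rewrite -/B in BT Bpd.
have dpos : (0 < d)%N.
  case/eigenvalueP: eigX => w _ wn0; case: (posnP d) => // d0.
  by move: wn0; apply: contraNT => _; apply/eqP/matrixP => i j; exfalso; have := ltn_ord j; move: (nat_of_ord j); rewrite d0.
pose s : R := Num.sqrt d%:R.
have s0 : 0 < s by rewrite sqrtr_gt0 ltr0n.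
have s2 : s ^+ 2 = d%:R by rewrite sqr_sqrtr ?ler0n.
have al0 : 0 < alpha by rewrite divr_gt0 // mulr_gt0.
have hal : alpha * (eps * lamX) = s by rewrite /alpha divfK // mulf_neq0 ?gt_eqF.
have XT : X^T = X.
  by apply: sum_symT => k; rewrite linearZ /= outerT.
have ZT : Z^T = Z by apply: sum_symT => k; exact: outerT.
have uB : B \in unitmx.
  apply/negPn/negP => nu.
  have : eigenvalue B 0.
    rewrite /eigenvalue /eigenspace (_ : 0%:M = 0) ?subr0; last by rewrite -scalemx1 scale0r.
    by rewrite kermx_eq0 row_free_unit.
  case/eigenvalueP => w hw wn0.
  have := Bpd (w^T); rewrite trmx_eq0 => /(_ wn0).
  by rewrite trmxK hw scale0r mul0mx mxE ltxx.
set iB := invmx B.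
have hA : A = iB *m iB.
  have u2 : B *m B \in unitmx by rewrite unitmx_mul uB.
  rewrite /A -/B expr2 -mulmxE.
  have e : B *m B *m (iB *m iB) = 1%:M.
    by rewrite mulmxA -(mulmxA B B iB) mulmxV // mulmx1 mulmxV.
  by rewrite -[RHS](mulKmx u2) e mulmx1.
have iBT : iB^T = iB by rewrite /iB trmx_inv BT.
have FroN : Fro N = 1 by rewrite FroE NT NN.
have FroiB : Fro iB = 1 by rewrite FroE iBT -hA.
have hZM : forall M, alpha * \tr (Z *m M) = \tr (B *m M) + ell * \tr M.
  move=> M; rewrite -[LHS]mxtraceZ scalemxAl (_ : alpha *: Z = B + ell%:M); last by rewrite /B subrK.
  by rewrite mulmxDl mxtraceD mul_scalar_mx mxtraceZ.
pose a k := mxinner (outer (v k)) A.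
pose c k := mxinner (outer (v k)) N.
have ha : forall k, 0 <= a k.
  by move=> k; rewrite /a mxinner_outerE -NN /qf -{1}NT quadTT n2_ge0.
have hc : forall k, 0 <= c k by move=> k; rewrite /c mxinner_outerE; apply: Npsd.
have trXM : forall M, \tr (X *m M) = \sum_k x k * mxinner (outer (v k)) M.
  move=> M; rewrite tr_sum_mul; apply: eq_bigr => k _.
  by rewrite -scalemxAl mxtraceZ.
have trZM : forall M, \tr (Z *m M) = \sum_(k in S) mxinner (outer (v k)) M.
  by move=> M; rewrite tr_sum_mul.
have hY : lamX <= \sum_k x k * a k.
  rewrite -trXM -NN mulmxA mxtrace_mulC mulmxA -[in X in \tr (X *m _ *m _)]NT.
  rewrite tr_quad_col.
  apply: le_trans (ler_sum _ (fun e _ => rayleigh XT minX (col e N))).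
  by rewrite -mulr_sumr sum_n2_col FroN mulr1.
have trBA : \tr (B *m A) = \tr iB by rewrite hA mulmxA mulmxV // mul1mx.
have tiB : \tr iB <= s.
  apply: sqr_le_le (ltW s0) _; rewrite s2.
  by have := tr_sq iB; rewrite FroiB mulr1.
have hell : ell <= alpha * lamZ - 1.
  case/eigenvalueP: eigZ => w hw wn0.
  pose u := w^T.
  have un0 : u != 0 by rewrite trmx_eq0.
  have hZu : Z *m u = lamZ *: u by rewrite /u -{1}ZT -trmx_mul hw linearZ.
  pose mu := alpha * lamZ - ell.
  have hBu : B *m u = mu *: u.
    by rewrite /B mulmxBl -scalemxAl hZu mul_scalar_mx scalerA scalerBl.
  have npos := n2_gt0 un0.
  have mu0 : 0 < mu.
    have := Bpd u un0; rewrite -mulmxA hBu -scalemxAr mxE -n2E.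
    by rewrite pmulr_lgt0.
  have e : u = iB *m (B *m u) by rewrite mulKmx.
  have hiBu : iB *m u = mu^-1 *: u.
    by rewrite {2}e hBu -scalemxAr scalerA mulVf ?scale1r // gt_eqF.
  have hAu : qf A u = mu^-1 * mu^-1 * n2 u.
    rewrite /qf -mulmxA hA -mulmxA hiBu -scalemxAr hiBu -!scalemxAr. rewrite n2E !mxE.
    by rewrite mulrA.
  have hAu2 : qf A u <= n2 u.
    rewrite /qf -NN -{1}NT quadTT.
    by have := n2_mul N u; rewrite FroN mul1r.
  rewrite hAu in hAu2.
  have t1 : mu^-1 * mu^-1 <= 1.
    by rewrite -(ler_pM2r npos) mul1r.
  have t0 : 0 < mu^-1 by rewrite invr_gt0.
  have t2 : mu * mu^-1 = 1 by rewrite mulfV // gt_eqF.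
  have : 1 <= mu by nra.
  rewrite /mu; lra.
have hZl : alpha * lamZ <= alpha * lamX - 2 * s.
  have -> : alpha * lamX - 2 * s = alpha * ((1 - 2 * eps) * lamX) by rewrite -hal; ring.
  by rewrite ler_wpM2l // ltW.
have hW : \sum_(k in S) a k + eps * lamX < lamX.
  have eW : alpha * \sum_(k in S) a k = \tr iB + ell by rewrite -trZM hZM trBA trA mulr1.
  rewrite -(ltr_pM2l al0) mulrDr eW hal; lra.
have tN0 : 0 <= \tr N by apply: tr_ge0_psd.
have tN : \tr N <= s.
  apply: sqr_le_le (ltW s0) _; rewrite s2.
  by have := tr_sq N; rewrite FroN mulr1.
have tBN : \tr (B *m N) <= d%:R.
  have eF : Fro (B *m N) = d%:R.
    rewrite FroE trmx_mul NT BT mulmxA mxtrace_mulC !mulmxA NN hA.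
    by rewrite -(mulmxA iB iB B) mulVmx // mulmx1 mulVmx // mxtrace1.
  apply: sqr_le_le; first exact: ler0n.
  by have := tr_sq (B *m N); rewrite eF -expr2.
have hals : alpha * lamX = s / eps.
  by rewrite -hal; field; rewrite gt_eqF.
have hC : alpha * \sum_(k in S) c k <= d%:R + d%:R / eps.
  rewrite -trZM hZM.
  suff : ell * \tr N <= d%:R / eps by lra.
  case: (leP ell 0) => hl.
    have : ell * \tr N <= 0 by apply: mulr_le0_ge0.
    have : 0 <= d%:R / eps by rewrite divr_ge0 ?ler0n ?ltW.
    lra.
  have h1 : ell * \tr N <= ell * s := ler_wpM2l (ltW hl) tN.
  have h2 : ell * s <= (alpha * lamX - 2 * s) * s.
    by rewrite ler_wpM2r ?ltW //; lra.
  have h3 : (alpha * lamX) * s = d%:R / eps by rewrite hals mulrAC -expr2 s2.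
  have h4 : 0 <= s * s by rewrite mulr_ge0 ?ltW.
  nra.
have trXE : \tr X = \sum_k x k * n2 (v k).
  by rewrite raddf_sum; apply: eq_bigr => k _; rewrite /= mxtraceZ tr_outer.
have x0 : forall k, 0 <= x k by move=> k; case/andP: (hx k).
have trX0 : 0 <= \tr X by rewrite trXE; apply: sumr_ge0 => k _; rewrite mulr_ge0 ?n2_ge0.
have haE : forall k, a k = n2 (N *m v k).
  by move=> k; rewrite /a mxinner_outerE -NN /qf -{1}NT quadTT.
have hP2 : (\sum_k x k * c k) ^+ 2 <= \tr X * \sum_k x k * a k.
  rewrite trXE; apply: wCS => // k; rewrite ?n2_ge0 //.
  rewrite /c mxinner_outerE haE /qf -mulmxA innerE.
  exact: CS.
pose G := 2 * d%:R / eps * Num.sqrt (lamavg / lamX).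
have G0 : 0 <= G.
  apply: mulr_ge0; last exact: sqrtr_ge0.
  by apply: mulr_ge0; [apply: mulr_ge0 => //; exact: ler0n | rewrite invr_ge0 ltW].
have hG2 : G ^+ 2 = 4 * d%:R * \tr X / (eps ^+ 2 * lamX).
  rewrite /G exprMn sqr_sqrtr; last first.
    by rewrite /lamavg; apply: divr_ge0; [apply: divr_ge0 => //; exact: ler0n | exact: ltW].
  rewrite /lamavg; field.
  by rewrite pnatr_eq0 -lt0n dpos gt_eqF ?gt_eqF.
have hPG : (2 * alpha * \sum_k x k * c k) ^+ 2 * lamX <= G ^+ 2 * \sum_k x k * a k.
  have -> : (2 * alpha * \sum_k x k * c k) ^+ 2 * lamX
      = 4 * d%:R / (eps ^+ 2 * lamX) * (\sum_k x k * c k) ^+ 2.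
    rewrite /alpha -/s -s2; field; by rewrite gt_eqF ?gt_eqF.
  have -> : G ^+ 2 * \sum_k x k * a k
      = 4 * d%:R / (eps ^+ 2 * lamX) * (\tr X * \sum_k x k * a k).
    by rewrite hG2; ring.
  apply: ler_wpM2l hP2.
  apply: divr_ge0; first by apply: mulr_ge0 => //; exact: ler0n.
  by apply: mulr_ge0; [exact: sqr_ge0 | exact: ltW].
have hE : \sum_k x k + G <= #|S|%:R - 2 * alpha * \sum_(k in S) c k.
  rewrite -/b; move: hb; rewrite -/q -/G; lra.
exact: (swap_exists hx ha hc (ltW al0) l0 e0 G0 hY hW hE hPG).
Qed.
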